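(* Let $\dot x = Ax+\sum_{i=1}^mB_iu_i$, $y_i=C_ix$ be an $n$-dimensional, jointly controllable and jointly observable $m$-channel continuous-time linear system whose neighbor graph is weakly connected. Let nonnegative integers $n_1,\dots,n_m$ be given and let $\{\bar A,\bar B_i,\bar C_i;m\}$ be the extended system with $\bar A=\begin{bmatrix}A&0\\0&0\end{bmatrix}$ ($\bar n\times\bar n$, $\bar n=n+\sum_in_i$), $\bar B_i=\begin{bmatrix}B_i&0\\0&E_i\end{bmatrix}$, $\bar C_i=\begin{bmatrix}C_i&0\\0&E_{\mathcal{N}_i}'\end{bmatrix}$, where $E_i$ is the $(\sum_kn_k)\times n_i$ block column matrix with $I_{n_i}$ as its $i$th block and zeros elsewhere, and $E_{\mathbf{s}}=[E_{i_1}\ \cdots\ E_{i_s}]$ for $\mathbf{s}=\{i_1<\dots<i_s\}$. Suppose $$n_i\ \ge\ n-\min_{\mathbf{s}\subset\{1,\dots,m\},\ \lambda\in\sigma(A)}\mathrm{rank}\begin{bmatrix}\lambda I_n-A & B_{\mathbf{s}}\\ C_{\{1,\dots,m\}-\mathbf{s}}&0\end{bmatrix}\quad\text{for all } i.$$ Then $\{\bar A,\bar B_i,\bar C_i;m\}$ has no fixed spectrum if and only if $\mathcal{N}_{\{1,\dots,m\}-\mathbf{s}}\cap\mathbf{s}\neq\emptyset$ for every subset $\mathbf{s}\subset\{1,\dots,m\}$ for which there is some $\lambda\in\sigma(A)$ with $\mathrm{rank}\begin{bmatrix}\lambda I_n-A&B_{\mathbf{s}}\\C_{\{1,\dots,m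\}-\mathbf{s}}&0\end{bmatrix}<n$.
   Context: Jointly controllable: $(A,[B_1\ \cdots\ B_m])$ controllable; jointly observable: $(\mathrm{column}\{C_1,\dots,C_m\},A)$ observable. The neighbor graph is a directed graph on $\{1,\dots,m\}$ with an arc $j\to i$ iff $j$ is a neighbor of $i$; $\mathcal{N}_i$ is the set of neighbors of $i$ including $i$, and $\mathcal{N}_{\mathbf{s}}=\bigcup_{i\in\mathbf{s}}\mathcal{N}_i$. A directed graph is weakly connected if removing self-arcs and replacing arcs by undirected edges yields a connected graph. $B_{\mathbf{s}}=[B_{i_1}\ \cdots\ B_{i_s}]$, $C_{\mathbf{s}}=\mathrm{column}\{C_{i_1},\dots,C_{i_s}\}$ for $\mathbf{s}=\{i_1<\dots<i_s\}$. The fixed spectrum of $\{A,B_i,C_i;m\}$ is the set of eigenvalues of $A+\sum_iB_iF_iC_i$ that do not change as the real matrices $F_i$ range over all values. *)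

(* Defs.v *)
From HB Require Import structures.
From mathcomp Require Import all_boot all_order all_algebra.
From mathcomp Require Import complex.
From mathcomp Require Import reals.

Set Implicit Arguments.
Unset Strict Implicit.
Unset Printing Implicit Defensive.

Import Order.TTheory GRing.Theory Num.Theory.
Local Open Scope ring_scope.

Definition cmx (R : realType) (p q : nat) (M : 'M[R]_(p, q)) : 'M[R[i]]_(p, q) :=
  map_mx (fun x : R => Complex x 0) M.

Definition spec (R : realType) (n : nat) (A : 'M[R]_n) (lam : R[i]) : Prop :=
  eigenvalue (cmx A) lam.

Definition controllable (R : realType) (n p : nat) (A : 'M[R]_n) (B : 'M[R]_(n, p)) : Prop :=
  \rank (\mxrow_(k < n) (A ^+ k *m B)) = n.

Definition observable (R : realType) (n q : nat) (C : 'M[R]_(q, n)) (A : 'M[R]_n) : Prop :=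
  controllable A^T C^T.

Definition Bsel (R : Type) (m n : nat) (p : 'I_m -> nat)
  (B : forall i : 'I_m, 'M[R]_(n, p i)) (s : {set 'I_m}) :
  'M[R]_(n, \sum_(k < #|s|) p (enum_val k)) :=
  \mxrow_(k < #|s|) B (enum_val k).

Definition Csel (R : Type) (m n : nat) (q : 'I_m -> nat)
  (C : forall i : 'I_m, 'M[R]_(q i, n)) (s : {set 'I_m}) :
  'M[R]_(\sum_(k < #|s|) q (enum_val k), n) :=
  \mxcol_(k < #|s|) C (enum_val k).

Definition pbh_rank (R : realType) (m n : nat) (p q : 'I_m -> nat) (A : 'M[R]_n)
  (B : forall i : 'I_m, 'M[R]_(n, p i)) (C : forall i : 'I_m, 'M[R]_(q i, n))
  (s : {set 'I_m}) (lam : R[i]) : nat :=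
  \rank (block_mx (lam%:M - cmx A) (cmx (Bsel B s))
                  (cmx (Csel C (~: s))) 0).

Definition fixed_eig (R : realType) (m N : nat) (p q : 'I_m -> nat) (A : 'M[R]_N)
  (B : forall i : 'I_m, 'M[R]_(N, p i)) (C : forall i : 'I_m, 'M[R]_(q i, N))
  (lam : R[i]) : Prop :=
  forall F : forall i : 'I_m, 'M[R]_(p i, q i),
    spec (A + \sum_(i < m) B i *m F i *m C i) lam.

Definition no_fixed_spectrum (R : realType) (m N : nat) (p q : 'I_m -> nat) (A : 'M[R]_N)
  (B : forall i : 'I_m, 'M[R]_(N, p i)) (C : forall i : 'I_m, 'M[R]_(q i, N)) : Prop :=
  ~ exists lam : R[i], fixed_eig A B C lam.

Definition Nset (m : nat) (nbr : 'I_m -> {set 'I_m}) (i : 'I_m) : {set 'I_m} :=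
  i |: nbr i.

Definition Nsetof (m : nat) (nbr : 'I_m -> {set 'I_m}) (s : {set 'I_m}) : {set 'I_m} :=
  \bigcup_(i in s) Nset nbr i.

(* neighbor graph: arc j -> i iff j \in nbr i.  Weakly connected: the
   underlying undirected graph (self-loops irrelevant) is connected. *)
Definition weakly_connected (m : nat) (nbr : 'I_m -> {set 'I_m}) : Prop :=
  forall i j : 'I_m,
    connect (fun a b : 'I_m => (b \in nbr a) || (a \in nbr b)) i j.

Definition Eblk (R : pzRingType) (m : nat) (nn : 'I_m -> nat) (i : 'I_m) :
  'M[R]_(\sum_(k < m) nn k, nn i) :=
  \mxcol_(k < m) (\matrix_(a < nn k, b < nn i)
                    ((k == i) && (nat_of_ord a == nat_of_ord b))%:R).

Definition Esel (R : pzRingType) (m : nat) (nn : 'I_m -> nat) (s : {set 'I_m}) :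
  'M[R]_(\sum_(k < m) nn k, \sum_(k < #|s|) nn (enum_val k)) :=
  \mxrow_(k < #|s|) Eblk R nn (enum_val k).

Definition Abar (R : pzRingType) (m n : nat) (nn : 'I_m -> nat) (A : 'M[R]_n) :
  'M[R]_(n + \sum_(k < m) nn k) :=
  block_mx A 0 0 0.

Definition Bbar (R : pzRingType) (m n : nat) (p nn : 'I_m -> nat)
  (B : forall i : 'I_m, 'M[R]_(n, p i)) (i : 'I_m) :
  'M[R]_(n + \sum_(k < m) nn k, p i + nn i) :=
  block_mx (B i) 0 0 (Eblk R nn i).

Definition Cbar (R : pzRingType) (m n : nat) (q nn : 'I_m -> nat)
  (nbr : 'I_m -> {set 'I_m})
  (C : forall i : 'I_m, 'M[R]_(q i, n)) (i : 'I_m) :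
  'M[R]_(q i + \sum_(k < #|Nset nbr i|) nn (enum_val k), n + \sum_(k < m) nn k) :=
  block_mx (C i) 0 0 (Esel R nn (Nset nbr i))^T.

(* Main.v *)
Require Import Defs.
From HB Require Import structures.
From mathcomp Require Import all_boot all_order all_algebra.
From mathcomp Require Import complex.
From mathcomp Require Import reals.
From mathcomp Require Import zify ring.
Set Warnings "-notation-overridden -ambiguous-paths".
Set Implicit Arguments.
Unset Strict Implicit.
Unset Printing Implicit Defensive.
Import Order.TTheory GRing.Theory Num.Theory.
Local Open Scope ring_scope.
Section LinAlg.
Variable F : fieldType.

Lemma rank_blk_le n c1 c2 r1 r2 (M : 'M[F]_n) (B1 : 'M_(n,c1)) (B2 : 'M_(n,c2))
  (C1 : 'M_(r1,n)) (C2 : 'M_(r2,n)) :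
  (B1^T <= B2^T)%MS -> (C1 <= C2)%MS ->
  (\rank (block_mx M B1 C1 0) <= \rank (block_mx M B2 C2 0))%N.
Proof.
move=> /submxP[D1 HB] /submxP[D2 HC].
have -> : block_mx M B1 C1 0 =
   block_mx 1%:M 0 0 D2 *m block_mx M B2 C2 0 *m block_mx 1%:M 0 0 D1^T.
  rewrite !mulmx_block !mul1mx !mul0mx !mulmx0 !mulmx1 !addr0 !add0r -HC.
  by rewrite -[B1]trmxK HB trmx_mul trmxK mul0mx.
by rewrite (leq_trans (mxrankM_maxl _ _)) // mxrankM_maxr.
Qed.

Lemma rank_le_tr m1 m2 n (Z : 'M[F]_(n,m1)) (Y : 'M[F]_(n,m2)) :
  (Z^T <= Y^T)%MS -> (\rank Z <= \rank Y)%N.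
Proof. by move=> H; rewrite -(mxrank_tr Z) -(mxrank_tr Y) mxrankS. Qed.

Lemma rank_det a b r (Y : 'M[F]_(a,b)) : (r <= \rank Y)%N ->
  exists (P : 'M[F]_(r,a)) (Q : 'M[F]_(b,r)), \det (P *m Y *m Q) != 0.
Proof.
move=> Hr.
have ra : (r <= a)%N by apply: leq_trans Hr (rank_leq_row _).
have rb : (r <= b)%N by apply: leq_trans Hr (rank_leq_col _).
exists (pid_mx r *m invmx (col_ebase Y)), (invmx (row_ebase Y) *m pid_mx r).
rewrite -{2}(mulmx_ebase Y) !mulmxA mulmxKV ?col_ebase_unit //.
rewrite -!mulmxA mulKVmx ?row_ebase_unit // !mulmxA !mul_pid_mx.
by rewrite (minn_idPl Hr) (minn_idPr ra) minnn (minn_idPr rb) pid_mx_1 det1 oner_neq0.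
Qed.

Lemma det_rank a b r (Y : 'M[F]_(a,b)) (P : 'M[F]_(r,a)) (Q : 'M[F]_(b,r)) :
  \det (P *m Y *m Q) != 0 -> (r <= \rank Y)%N.
Proof.
move=> H; have U : P *m Y *m Q \in unitmx by rewrite unitmxE unitfE.
rewrite -(mxrank_unit U); apply: leq_trans (mxrankM_maxl _ _) _.
exact: mxrankM_maxr.
Qed.

Lemma colmx_subl m1 m2 n (A : 'M[F]_(m1,n)) (B : 'M_(m2,n)) : (A <= col_mx A B)%MS.
Proof. by rewrite -addsmxE addsmxSl. Qed.
Lemma colmx_subr m1 m2 n (A : 'M[F]_(m1,n)) (B : 'M_(m2,n)) : (B <= col_mx A B)%MS.
Proof. by rewrite -addsmxE addsmxSr. Qed.

Lemma rowmx0E m n k (A : 'M[F]_(m,n)) : row_mx A (0 : 'M_(m,k)) = A *m row_mx 1%:M 0.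
Proof. by rewrite mul_mx_row mulmx1 mulmx0. Qed.
Lemma row0mxE m n k (A : 'M[F]_(m,n)) : row_mx (0 : 'M_(m,k)) A = A *m row_mx 0 1%:M.
Proof. by rewrite mul_mx_row mulmx1 mulmx0. Qed.

Lemma rank_step a b k l (X : 'M[F]_(a,b)) (U : 'M_(a,k)) (V : 'M_(l,b)) :
  (\rank X < \rank (row_mx X U))%N -> (\rank X < \rank (col_mx X V))%N ->
  exists i j, (\rank X < \rank (X + U *m delta_mx i j *m V)%R)%N.
Proof.
move=> HU HV.
have [i Hi] : exists i, ~~ ((col i U)^T <= X^T)%MS.
  case: (pickP (fun i => ~~ ((col i U)^T <= X^T)%MS)) => [i Hi|H]; first by exists i.
  have sUX : (U^T <= X^T)%MS.
    by apply/row_subP => i0; rewrite -tr_col; apply/negbFE; exact: (H i0).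
  have : (\rank (row_mx X U) <= \rank X)%N.
    by rewrite -mxrank_tr tr_row_mx -(mxrank_tr X) mxrankS // col_mx_sub submx_refl.
  by rewrite leqNgt HU.
have [j Hj] : exists j, ~~ (row j V <= X)%MS.
  case: (pickP (fun j => ~~ (row j V <= X)%MS)) => [j Hj|H]; first by exists j.
  have sVX : (V <= X)%MS by apply/row_subP => j0; apply/negbFE; exact: (H j0).
  have : (\rank (col_mx X V) <= \rank X)%N by rewrite mxrankS // col_mx_sub submx_refl.
  by rewrite leqNgt HV.
exists i, j.
set u := col i U; set v := row j V.
have -> : U *m delta_mx i j *m V = u *m v.
  rewrite /u /v colE rowE -(mul_delta_mx (0 : 'I_1)) !mulmxA.
  by rewrite -!mulmxA (mulmxA (delta_mx i 0)).
set K := cokermx X^T.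
have hK : X^T *m K = 0 by rewrite mulmx_coker.
have huK : u^T *m K != 0 by rewrite -submxE.
set c := K^T *m u.
have hc : c != 0.
  apply: contraNneq huK => c0; by rewrite -[u^T *m K]trmxK trmx_mul trmxK -/c c0 trmx0.
have hKY : K^T *m (X + u *m v)%R = c *m v.
  rewrite mulmxDr -[K^T *m X]trmxK trmx_mul trmxK hK trmx0 add0r mulmxA //.
have [x Hx] : exists x, c x 0 != 0.
  case: (pickP (fun x => c x 0 != 0)) => [x Hx|H]; first by exists x.
  case/eqP: hc; apply/matrixP => x y; rewrite (ord1 y) [in RHS]mxE; apply/eqP/negbFE; exact: H.
have vY : (v <= (X + u *m v)%R)%MS.
  have h1 : (v <= c *m v)%MS.
    have : (row x (c *m v) <= c *m v)%MS by apply: row_sub.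
    have -> : row x (c *m v) = c x 0 *: v.
      by apply/rowP => y; rewrite !mxE big_ord1 !mxE.
    by move/(scalemx_sub (c x 0)^-1); rewrite scalerA mulVf // scale1r.
  by apply: submx_trans h1 _; rewrite -hKY submxMl.
have XY : (X <= (X + u *m v)%R)%MS.
  rewrite -[X in (X <= _)%MS](addrK (u *m v)) addmx_sub // -mulNmx.
  exact: submx_trans (submxMl _ _) vY.
have h2 : (col_mx X v <= (X + u *m v)%R)%MS by rewrite col_mx_sub XY vY.
have : (\rank X < \rank (col_mx X v))%N.
  apply: rank_ltmx; rewrite ltmxE colmx_subl /= col_mx_sub submx_refl /=.
  exact: Hj.
move/leq_trans; apply. exact: mxrankS h2.
Qed.
Lemma inv_rowU a b k l (X : 'M[F]_(a,b)) (U : 'M_(a,k)) (V : 'M_(l,b)) D :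
  (\rank (row_mx X U) <= \rank (row_mx (X + U *m D *m V)%R U))%N.
Proof.
have -> : row_mx X U = row_mx (X + U *m D *m V) U *m block_mx 1%:M 0 (- (D *m V)) 1%:M.
  by rewrite mul_row_block !mulmx1 !mulmx0 ?addr0 ?add0r mulmxN !mulmxA addrK.
exact: mxrankM_maxl.
Qed.

Lemma inv_colV a b k l (X : 'M[F]_(a,b)) (U : 'M_(a,k)) (V : 'M_(l,b)) D :
  (\rank (col_mx X V) <= \rank (col_mx (X + U *m D *m V)%R V))%N.
Proof.
have -> : col_mx X V = block_mx 1%:M (- (U *m D)) 0 1%:M *m col_mx (X + U *m D *m V) V.
  by rewrite mul_block_col !mul1mx !mul0mx ?add0r ?addr0 mulNmx addrK.
exact: mxrankM_maxr.
Qed.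

End LinAlg.

Section MaxRank.
Variable R : realType.
Local Notation Cc := (R[i]).
Local Notation rc := (real_complex R).
Local Notation cm := (map_mx rc).

Lemma cmxE p q (M : 'M[R]_(p,q)) : cmx M = cm M.
Proof. by apply/matrixP => i j; rewrite !mxE. Qed.

Lemma cm_delta k l (i : 'I_k) (j : 'I_l) : cm (delta_mx i j) = delta_mx i j.
Proof. by apply/matrixP => x y; rewrite !mxE rmorph_nat. Qed.

Lemma maxrank a b k l r (X : 'M[Cc]_(a,b)) (U : 'M_(a,k)) (V : 'M_(l,b)) :
  (r <= \rank (row_mx X U))%N -> (r <= \rank (col_mx X V))%N ->
  exists G : 'M[R]_(k,l), (r <= \rank (X + U *m cm G *m V)%R)%N.
Proof.
move: {2}(r - \rank X)%N (leqnn (r - \rank X)%N) => d.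
elim: d X => [|d IH] X Hd HU HV.
  exists 0; rewrite map_mx0 mulmx0 mul0mx addr0.
  by rewrite -subn_eq0 -leqn0.
case: (leqP r (\rank X)) => Hr.
  by exists 0; rewrite map_mx0 mulmx0 mul0mx addr0.
have [i [j Hij]] := rank_step (leq_trans Hr HU) (leq_trans Hr HV).
set Y := (X + U *m delta_mx i j *m V)%R.
have [G HG] : exists G : 'M[R]_(k,l), (r <= \rank (Y + U *m cm G *m V)%R)%N.
  apply: IH.
  - move: Hd Hij; rewrite -/Y; lia.
  - exact: leq_trans HU (inv_rowU _ _ _ _).
  - exact: leq_trans HV (inv_colV _ _ _ _).
exists (delta_mx i j + G); move: HG; rewrite /Y map_mxD cm_delta.
by rewrite mulmxDr mulmxDl addrA.
Qed.

End MaxRank.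
Section LinePoly.
Variable R : realType.
Local Notation Cc := (R[i]).
Local Notation rc := (real_complex R).
Local Notation cm := (map_mx rc).

Lemma poly_nonroot (p : {poly Cc}) : p != 0 -> exists t : R, p.[rc t] != 0.
Proof.
move=> p0.
case: (pickP (fun k : 'I_(size p) => p.[rc (k%:R)] != 0)) => [k Hk|H].
  by exists k%:R.
have h1 : all (root p) [seq rc (k%:R) | k <- iota 0 (size p)].
  apply/allP => z /mapP [k]; rewrite mem_iota add0n => /andP [_ Hk] ->.
  by have := H (Ordinal Hk); rewrite /root /= => /negbFE.
have h2 : uniq [seq rc (k%:R) | k <- iota 0 (size p)].
  rewrite map_inj_uniq ?iota_uniq // => x y /complexI /eqP.
  by rewrite eqr_nat => /eqP.
by have := max_poly_roots p0 h1 h2; rewrite size_map size_iota ltnn.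
Qed.

Definition lp k l (phi : 'M[R]_(k,l) -> Prop) :=
  forall Fa Fb, phi Fa -> exists p : {poly Cc},
    p.[0] != 0 /\ forall t : R, p.[rc t] != 0 -> phi (Fa + t *: (Fb - Fa)).

Lemma lp_true k l : lp (fun _ : 'M[R]_(k,l) => True).
Proof. by move=> Fa Fb _; exists 1; rewrite hornerC oner_neq0. Qed.

Lemma lp_and k l (phi psi : 'M[R]_(k,l) -> Prop) :
  lp phi -> lp psi -> lp (fun F => phi F /\ psi F).
Proof.
move=> h1 h2 Fa Fb [H1 H2].
have [p [p0 Hp]] := h1 Fa Fb H1; have [q [q0 Hq]] := h2 Fa Fb H2.
exists (p * q); rewrite hornerM mulf_neq0 //; split => // t.
by rewrite hornerM mulf_eq0 negb_or => /andP [/Hp ? /Hq ?].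
Qed.

Lemma lp_imp k l (b : bool) (phi : 'M[R]_(k,l) -> Prop) :
  lp phi -> lp (fun F => b -> phi F).
Proof.
case: b => h Fa Fb H.
  have [p [p0 Hp]] := h Fa Fb (H isT); exists p; split => // t /Hp //.
by exists 1; rewrite hornerC oner_neq0.
Qed.

Lemma lp_ext k l (phi psi : 'M[R]_(k,l) -> Prop) :
  (forall F, phi F <-> psi F) -> lp phi -> lp psi.
Proof.
move=> E h Fa Fb /E H; have [p [p0 Hp]] := h Fa Fb H.
by exists p; split => // t /Hp /E.
Qed.

Lemma lp_seq k l (T : eqType) (phi : T -> 'M[R]_(k,l) -> Prop) (s : seq T) :
  (forall x, lp (phi x)) -> lp (fun F => forall x, x \in s -> phi x F).
Proof.
move=> h; elim: s => [|y s IH].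
  apply: (@lp_ext k l (fun _ => True)); last exact: lp_true.
  by move=> F; split.
apply: (lp_ext _ (lp_and (h y) IH)) => F; split.
  by move=> [H1 H2] x; rewrite in_cons => /orP [/eqP -> //|]; apply: H2.
move=> H; split; first by apply: H; rewrite mem_head.
by move=> x xs; apply: H; rewrite in_cons xs orbT.
Qed.

Lemma lp_combine k l (phi psi : 'M[R]_(k,l) -> Prop) Fa Fb :
  lp phi -> lp psi -> phi Fa -> psi Fb -> exists F, phi F /\ psi F.
Proof.
move=> h1 h2 Ha Hb.
have [p [p0 Hp]] := h1 Fa Fb Ha; have [q [q0 Hq]] := h2 Fb Fa Hb.
have pn0 : p != 0 by apply: contraNneq p0 => e; rewrite e horner0.
have qn0 : q \Po (1 - 'X) != 0.
  apply: contraNneq q0 => e.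
  have := congr1 (fun r => r.[1]) e.
  rewrite horner_comp !hornerE subrr => ->; by rewrite eqxx.
have [t Ht] := poly_nonroot (mulf_neq0 pn0 qn0).
move: Ht; rewrite hornerM mulf_eq0 negb_or horner_comp !hornerE => /andP [H1 H2].
exists (Fa + t *: (Fb - Fa)); split; first exact: Hp.
have -> : Fa + t *: (Fb - Fa) = Fb + (1 - t) *: (Fa - Fb).
  by apply/matrixP => x y; rewrite !mxE; ring.
by apply: Hq; rewrite rmorphB rmorph1.
Qed.

Lemma lp_all k l (T : finType) (phi : T -> 'M[R]_(k,l) -> Prop) :
  (forall x, lp (phi x)) -> (forall x, exists F, phi x F) ->
  exists F, forall x, phi x F.
Proof.
move=> h e.
suff [F HF] : exists F, forall x, x \in enum T -> phi x F.
  by exists F => x; apply: HF; rewrite mem_enum.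
elim: (enum T) => [|y s [F HF]]; first by exists 0.
have [G HG] := e y.
have [F' [H1 H2]] := lp_combine (@lp_seq k l T phi s h) (h y) HF HG.
by exists F' => x; rewrite in_cons => /orP [/eqP -> //|]; apply: H1.
Qed.

Lemma poly_det a b r (P : 'M[Cc]_(r,a)) (Y0 Y1 : 'M[Cc]_(a,b)) (Q : 'M[Cc]_(b,r)) :
  exists p : {poly Cc}, forall z, p.[z] = \det (P *m (Y0 + z *: Y1) *m Q).
Proof.
exists (\det (map_mx polyC P *m (map_mx polyC Y0 + 'X *: map_mx polyC Y1)
              *m map_mx polyC Q)) => z.
rewrite -horner_evalE -det_map_mx !map_mxM; congr (\det (_ *m _ *m _)).
- by apply/matrixP => i j; rewrite !mxE /= horner_evalE hornerC.
- by apply/matrixP => i j; rewrite !mxE /= horner_evalE hornerD hornerM hornerX !hornerC.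
- by apply/matrixP => i j; rewrite !mxE /= horner_evalE hornerC.
Qed.

Lemma lp_rank a b k l r (X : 'M[Cc]_(a,b)) (U : 'M_(a,k)) (V : 'M_(l,b)) :
  lp (fun G : 'M[R]_(k,l) => (r <= \rank (X + U *m cm G *m V)%R)%N).
Proof.
move=> Fa Fb /rank_det [P [Q HPQ]].
have [p Hp] := poly_det P (X + U *m cm Fa *m V) (U *m cm (Fb - Fa) *m V) Q.
have E : forall t : R, (X + U *m cm (Fa + t *: (Fb - Fa)) *m V =
   (X + U *m cm Fa *m V) + rc t *: (U *m cm (Fb - Fa) *m V))%R.
  move=> t; rewrite map_mxD map_mxZ mulmxDr mulmxDl addrA.
  by rewrite -scalemxAr -scalemxAl.
exists p; split.
  by rewrite Hp scale0r addr0.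
move=> t; rewrite Hp -E; exact: det_rank.
Qed.

End LinePoly.
Section SumSub.
Variable F : fieldType.
Lemma sum_mul_sub (I : finType) (P : pred I) (r : I -> nat) n k m0
   (Z : forall i, 'M[F]_(r i, n)) (Y : 'M_(m0, n)) (K : 'M_(n, k)) w (W : 'M_(w, k)) :
  (Y <= \sum_(i | P i) <<Z i>>)%MS -> (forall i, P i -> (Z i *m K <= W)%MS) ->
  (Y *m K <= W)%MS.
Proof.
move=> HY HZ.
rewrite -(eqmxMr K (genmxE Y)).
have : (<<Y>> <= \sum_(i | P i) <<<<Z i>>%MS>>)%MS.
  by rewrite genmxE; apply: submx_trans HY _; apply: sumsmxS => i _; rewrite !genmxE.
case/sub_sums_genmxP => u ->; rewrite mulmx_suml; apply: summx_sub => i Pi.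
by rewrite -mulmxA; apply: submx_trans (submxMl _ _) _; rewrite (eqmxMr K (genmxE (Z i))) HZ.
Qed.

Lemma rank_blk00 a b c d (M : 'M[F]_(a,b)) :
  (\rank (block_mx M (0 : 'M_(a,c)) (0 : 'M_(d,b)) 0) <= \rank M)%N.
Proof. by rewrite rank_diag_block_mx mxrank0 addn0. Qed.

Lemma sum_sup (I : finType) (P : pred I) (r : I -> nat) n
   (Z : forall i, 'M[F]_(r i, n)) i : P i -> (Z i <= \sum_(j | P j) <<Z j>>)%MS.
Proof. by move=> Pi; apply: (sumsmx_sup i) => //; rewrite genmxE. Qed.
End SumSub.

Section AC.
Variable R : realType.
Local Notation Cc := (R[i]).
Local Notation rc := (real_complex R).
Local Notation cm := (map_mx rc).
Variables (n m : nat) (p q : 'I_m -> nat).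
Variables (B : forall i, 'M[Cc]_(n, p i)) (C : forall i, 'M[Cc]_(q i, n)).

Definition Bsp (s : {set 'I_m}) : 'M[Cc]_n := (\sum_(i in s) <<(B i)^T>>)%MS.
Definition Csp (s : {set 'I_m}) : 'M[Cc]_n := (\sum_(i in s) <<C i>>)%MS.

Definition upd (G : forall i, 'M[R]_(p i, q i)) j (Gj : 'M[R]_(p j, q j)) :
  forall i, 'M[R]_(p i, q i) :=
  fun i => match j =P i with
           | ReflectT e => eq_rect j (fun i => 'M[R]_(p i, q i)) Gj i e
           | ReflectF _ => G i end.

Arguments upd : clear implicits.

Lemma upd_eq G j Gj : upd G j Gj j = Gj.
Proof.
rewrite /upd; case: eqP => // e.
by rewrite (eq_irrelevance e (erefl j)).
Qed.

Lemma upd_neq G j Gj i : i != j -> upd G j Gj i = G i.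
Proof. move=> ij; rewrite /upd; case: eqP => // e; exfalso; by rewrite e eqxx in ij. Qed.

Lemma AC k : forall (T : {set 'I_m}) (M : 'M[Cc]_n), #|T| = k ->
  (forall s : {set 'I_m}, s \subset T -> (n <= \rank (block_mx M (Bsp s)^T (Csp (T :\: s)) 0))%N) ->
  exists G : (forall i, 'M[R]_(p i, q i)),
    (n <= \rank (M + \sum_(i in T) B i *m cm (G i) *m C i)%R)%N.
Proof.
elim: k => [|k IH] T M HT H.
  move: HT => /eqP; rewrite cards_eq0 => /eqP ET; subst T.
  exists (fun i => 0); rewrite big_set0 addr0.
  have := H set0 (sub0set _); rewrite /Bsp /Csp setD0 !big_set0 trmx0.
  by move=> H0; apply: leq_trans H0 _; exact: rank_blk00.
have [j Hj] : exists j, j \in T.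
  by apply/set0Pn; rewrite -card_gt0 HT.
set T' := T :\ j.
have HT' : #|T'| = k by move: HT; rewrite (cardsD1 j T) Hj add1n => -[].
have jT' : j \notin T' by rewrite !inE eqxx.
pose X s := block_mx M (Bsp s)^T (Csp (T' :\: s)) 0.
pose U := col_mx (B j) (0 : 'M[Cc]_(n, p j)).
pose V := row_mx (C j) (0 : 'M[Cc]_(q j, n)).
have EX : forall s (G : 'M[R]_(p j, q j)),
    (X s + U *m cm G *m V)%R = block_mx (M + B j *m cm G *m C j)%R (Bsp s)^T (Csp (T' :\: s)) 0.
  move=> s G; rewrite /X /U /V mul_col_mx mul0mx mul_col_row !mulmx0 mul0mx.
  by rewrite add_block_mx !addr0.
pose phi (s : {set 'I_m}) (G : 'M[R]_(p j, q j)) :=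
   s \subset T' -> (n <= \rank (X s + U *m cm G *m V)%R)%N.
have [Gj HGj] : exists G, forall s, phi s G.
  apply: lp_all => s; first by apply: lp_imp; apply: lp_rank.
  case sT: (s \subset T'); last by exists 0; rewrite /phi sT.
  have js : j \notin s by apply: contra jT'; apply: (subsetP sT).
  have H1 : (n <= \rank (row_mx (X s) U))%N.
    have E1 : T :\: (j |: s) = T' :\: s.
      by apply/setP => x; rewrite !inE negb_or andbCA -andbA.
    have := H (j |: s); rewrite subUset sub1set Hj E1 /=.
    move/(_ (subset_trans sT (subD1set _ _))) => H1.
    apply: leq_trans H1 _; apply: rank_le_tr.
    rewrite tr_block_mx tr_row_mx /X /U tr_block_mx tr_col_mx !trmxK !trmx0.
    rewrite !block_mxEv col_mx_sub; apply/andP; split.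
      by apply: submx_trans (colmx_subl _ _); apply: colmx_subl.
    rewrite rowmx0E; apply: sum_mul_sub (submx_refl _) _ => i /setU1P [->|iS].
      by rewrite -rowmx0E colmx_subr.
    apply: submx_trans (submxMr _ (sum_sup (fun i => (B i)^T) iS)) _.
    rewrite -rowmx0E; apply: submx_trans (colmx_subl _ _); exact: colmx_subr.
  have H2 : (n <= \rank (col_mx (X s) V))%N.
    have := H s (subset_trans sT (subD1set _ _)) => H2.
    apply: leq_trans H2 _; apply: mxrankS.
    rewrite block_mxEv col_mx_sub; apply/andP; split.
      by apply: submx_trans (colmx_subl _ _); rewrite /X block_mxEv colmx_subl.
    rewrite rowmx0E; apply: sum_mul_sub (submx_refl _) _ => i.
    case: (eqVneq i j) => [->|ij] iTs; first by rewrite -rowmx0E colmx_subr.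
    have iT : i \in T' :\: s by move: iTs; rewrite !inE ij.
    apply: submx_trans (submxMr _ (sum_sup (fun i => C i) iT)) _.
    rewrite -rowmx0E; apply: submx_trans (colmx_subl _ _); rewrite /X block_mxEv.
    exact: colmx_subr.
  have [G HG] := maxrank H1 H2.
  by exists G.
have [G' HG'] := IH T' (M + B j *m cm Gj *m C j)%R HT'
   (fun s sT => let h := HGj s sT in eq_ind _ (fun Z => (n <= \rank Z)%N) h _ (EX s Gj)).
exists (upd G' j Gj).
have E2 : \sum_(i in T :\ j) B i *m cm (upd G' j Gj i) *m C i =
          \sum_(i in T') B i *m cm (G' i) *m C i.
  by apply: eq_bigr => i; rewrite !inE => /andP [ij _]; rewrite upd_neq.
by rewrite (big_setD1 j Hj) /= upd_eq E2 addrA.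
Qed.

Lemma fixed_rank (s : {set 'I_m}) (M : 'M[Cc]_n) :
  (\rank (block_mx M (Bsp s)^T (Csp (~: s)) 0) < n)%N ->
  forall G : (forall i, 'M[R]_(p i, q i)),
    (\rank (M + \sum_i B i *m cm (G i) *m C i)%R < n)%N.
Proof.
move=> H G.
rewrite (bigID (fun i => i \in s)) /=.
set S1 := \sum_(i | i \in s) _. set S2 := \sum_(i | i \notin s) _.
have [D1 HD1] : exists D1, S1 = (Bsp s)^T *m D1.
  have : (S1^T <= Bsp s)%MS.
    rewrite /S1 raddf_sum; apply: summx_sub => i Hi; rewrite /= !trmx_mul.
    do 2 apply: submx_trans (submxMl _ _) _; rewrite /Bsp; exact: (sum_sup (fun i => (B i)^T) Hi).
  by case/submxP => D HD; exists D^T; rewrite -[S1]trmxK HD trmx_mul.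
have [D2 HD2] : exists D2, S2 = D2 *m Csp (~: s).
  apply/submxP; apply: summx_sub => i Hi; apply: submx_trans (submxMl _ _) _.
  by rewrite /Csp; apply: (sum_sup (fun i => C i)); rewrite inE.
have -> : (M + (S1 + S2) = row_mx 1%:M D2 *m block_mx M (Bsp s)^T (Csp (~: s)) 0 *m col_mx 1%:M D1)%R.
  rewrite mul_row_block !mul1mx mulmx0 addr0 mul_row_col mulmx1 HD1 HD2.
  by rewrite addrAC addrA.
apply: leq_ltn_trans (mxrankM_maxl _ _) _.
exact: leq_ltn_trans (mxrankM_maxr _ _) H.
Qed.

End AC.
Section Blocks.
Variable F : fieldType.

Lemma mxcol_enum m c (r : 'I_m -> nat) (Z : forall i, 'M[F]_(r i, c)) (S : {set 'I_m}) :
  (\mxcol_(k < #|S|) Z (enum_val k) :=: \sum_(i in S) <<Z i>>)%MS.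
Proof.
apply/eqmxP/andP; split.
  apply/row_subP => x; rewrite row_mxcol; apply: submx_trans (row_sub _ _) _.
  by apply: (sum_sup Z); exact: enum_valP.
apply/sumsmx_subP => i Hi; rewrite genmxE.
have h : forall k : 'I_#|S|, (Z (enum_val k) <= \mxcol_(k < #|S|) Z (enum_val k))%MS.
  move=> k; rewrite -[X in (X <= _)%MS](mxcolK (fun k => Z (enum_val k)) k).
  by apply/row_subP => y; rewrite /submxcol row_rowsub row_sub.
by move: (h (enum_rank_in Hi i)); rewrite enum_rankK_in.
Qed.

Lemma sum_setI m a b (f : 'I_m -> 'M[F]_(a,b)) (S T : {set 'I_m}) :
  \sum_(i in S) (if i \in T then f i else 0) = \sum_(i in S :&: T) f i.
Proof.
rewrite -big_mkcondr /=; apply: eq_bigl => i; by rewrite inE.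
Qed.

Lemma sum_setC m a b (f : 'I_m -> 'M[F]_(a,b)) (S : {set 'I_m}) :
  \sum_i f i = (\sum_(i in S) f i + \sum_(i in ~: S) f i)%R.
Proof.
rewrite (bigID (fun i => i \in S)) /=; congr (_ + _).
by apply: eq_bigl => i; rewrite inE.
Qed.

Variables (m : nat) (nn : 'I_m -> nat).
Local Notation nu := (\sum_(k < m) nn k)%N.
Definition blk k i : 'M[F]_(nn k, nn i) :=
  \matrix_(a < nn k, b < nn i) ((k == i) && (nat_of_ord a == nat_of_ord b))%:R.
Local Notation E i := (Eblk F nn i).

Lemma EblkE i : E i = \mxcol_(k < m) blk k i.
Proof. by []. Qed.

Lemma blk_neq k i : k != i -> blk k i = 0.
Proof. by move=> ki; apply/matrixP => a b; rewrite !mxE (negbTE ki). Qed.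

Lemma blk_id i : blk i i = 1%:M.
Proof. by apply/matrixP => a b; rewrite !mxE eqxx. Qed.

Lemma EtE i : (E i)^T *m E i = 1%:M.
Proof.
rewrite EblkE tr_mxcol mul_mxrow_mxcol (bigD1 i) //= big1 ?addr0.
  by rewrite blk_id trmx1 mul1mx.
by move=> k ki; rewrite blk_neq // trmx0 mul0mx.
Qed.

Lemma EtE0 i j : i != j -> (E i)^T *m E j = 0.
Proof.
move=> ij; rewrite (EblkE i) (EblkE j) tr_mxcol mul_mxrow_mxcol big1 // => k _.
case: (eqVneq k i) => [->|ki]; first by rewrite (blk_neq ij) mulmx0.
by rewrite blk_neq // trmx0 mul0mx.
Qed.

Lemma EEt_sum : \sum_i E i *m (E i)^T = 1%:M :> 'M[F]_nu.
Proof.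
have -> : \sum_i E i *m (E i)^T =
   \sum_i \mxblock_(k, l) (blk k i *m (blk l i)^T).
  by apply: eq_bigr => i _; rewrite EblkE tr_mxcol mul_mxcol_mxrow.
rewrite -mxblock_sum -(mxdiagZ (p_ := nn) 1); apply: eq_mxblock => k l.
case: (eqVneq k l) => [<-|kl].
  rewrite (bigD1 k) //= big1 ?addr0; first by rewrite blk_id trmx1 mul1mx conform_mx_id.
  by move=> i ik; rewrite (@blk_neq k i) ?mul0mx // eq_sym.
apply: big1 => i _; case: (eqVneq i k) => [->|ik].
  by rewrite (@blk_neq l k) ?trmx0 ?mulmx0 // eq_sym.
by rewrite (@blk_neq k i) ?mul0mx // eq_sym.
Qed.

Definition Pi (S : {set 'I_m}) : 'M[F]_nu := \sum_(i in S) E i *m (E i)^T.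

Lemma EtPi k S : (E k)^T *m Pi S = if k \in S then (E k)^T else 0.
Proof.
rewrite /Pi mulmx_sumr; case: (boolP (k \in S)) => kS.
  rewrite (big_setD1 k kS) /= mulmxA EtE mul1mx [X in _ + X]big1 ?addr0 // => i.
  by rewrite !inE => /andP [ik _]; rewrite mulmxA EtE0 ?mul0mx // eq_sym.
apply: big1 => i iS; rewrite mulmxA EtE0 ?mul0mx //.
by apply: contraNneq kS => ->.
Qed.

Lemma PiE k S : Pi S *m E k = if k \in S then E k else 0.
Proof.
rewrite /Pi mulmx_suml; case: (boolP (k \in S)) => kS.
  rewrite (big_setD1 k kS) /= -mulmxA EtE mulmx1 [X in _ + X]big1 ?addr0 // => i.
  by rewrite !inE => /andP [ik _]; rewrite -mulmxA EtE0 ?mulmx0.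
apply: big1 => i iS; rewrite -mulmxA EtE0 ?mulmx0 //.
by apply: contraNneq kS => <-.
Qed.

Lemma PiPi S T : Pi S *m Pi T = Pi (S :&: T).
Proof.
rewrite {1}/Pi mulmx_suml.
have -> : \sum_(i in S) E i *m (E i)^T *m Pi T =
          \sum_(i in S) (if i \in T then E i *m (E i)^T else 0).
  by apply: eq_bigr => i _; rewrite -mulmxA EtPi; case: (i \in T); rewrite ?mulmx0.
by rewrite /Pi sum_setI.
Qed.

Lemma Pi_tr S : (Pi S)^T = Pi S.
Proof. by rewrite /Pi raddf_sum; apply: eq_bigr => i _; rewrite /= trmx_mul trmxK. Qed.

Lemma Pi_split S : (Pi S + Pi (~: S) = 1%:M)%R.
Proof. by rewrite -EEt_sum (sum_setC _ S). Qed.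

Lemma Et_sub_Pi k (S : {set 'I_m}) : k \in S -> ((E k)^T <= Pi S)%MS.
Proof. by move=> kS; have := submxMl (E k)^T (Pi S); rewrite EtPi kS. Qed.

Lemma Pi_eqmx S : (Pi S :=: \sum_(i in S) <<(E i)^T>>)%MS.
Proof.
apply/eqmxP/andP; split.
  apply: summx_sub => i iS; apply: submx_trans (submxMl _ _) _.
  exact: (sum_sup (fun i => (E i)^T) iS).
by apply/sumsmx_subP => i iS; rewrite genmxE Et_sub_Pi.
Qed.

Lemma rank_Et k : (nn k <= \rank (E k)^T)%N.
Proof. by rewrite -{1}(mxrank1 F (nn k)) -(EtE k) mxrankM_maxl. Qed.

End Blocks.
Section P2.
Variable F : fieldType.
Variables (m : nat) (nn : 'I_m -> nat).
Local Notation nu := (\sum_(k < m) nn k)%N.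
Local Notation E i := (Eblk F nn i).
Local Notation Pi := (Pi F nn).

Lemma Pi0 : Pi set0 = 0.
Proof. by rewrite /Pi big_set0. Qed.

Lemma Pi_idem S : Pi S *m Pi S = Pi S.
Proof. by rewrite PiPi setIid. Qed.

Lemma Pi_cap_rank S N : \rank (Pi S :&: Pi N)%MS = \rank (Pi (N :&: S)).
Proof.
apply/eqP; rewrite eqn_leq; apply/andP; split; last first.
  apply: mxrankS; rewrite sub_capmx; apply/andP; split.
    by rewrite -PiPi submxMl.
  by rewrite setIC -PiPi submxMl.
apply: mxrankS.
set w := (Pi S :&: Pi N)%MS.
have [D1 H1] : exists D, w = D *m Pi S by apply/submxP; apply: capmxSl.
have [D2 H2] : exists D, w = D *m Pi N by apply/submxP; apply: capmxSr.
have -> : w = D1 *m Pi (N :&: S).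
  by rewrite {1}H2 -Pi_idem mulmxA -H2 H1 -mulmxA PiPi setIC.
exact: submxMl.
Qed.

Lemma scal0 k : (0 : F)%:M = 0 :> 'M_k.
Proof. by apply/matrixP => i j; rewrite !mxE mul0rn. Qed.

Lemma P2_rank (lam : F) (S N : {set 'I_m}) : ~: S \subset N ->
  \rank (block_mx lam%:M (Pi S) (Pi N) 0) = (nu + \rank (Pi (N :&: S)))%N.
Proof.
move=> SN.
case: (eqVneq lam 0) => [->|l0].
  set W := block_mx (0 : 'M[F]_nu) 1%:M 1%:M 0.
  have WW : W *m W = 1%:M.
    by rewrite /W mulmx_block !mulmx0 !mul0mx !mulmx1 !addr0 !add0r -scalar_mx_block.
  have Wf : row_free W by apply/row_freeP; exists W.
  rewrite -(mxrankMfree _ Wf) /W mulmx_block scal0 !mulmx0 !mul0mx !mulmx1 !addr0 !add0r.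
  rewrite rank_diag_block_mx -mxrank_sum_cap Pi_cap_rank; congr (_ + _)%N.
  apply/eqP; rewrite eqn_leq rank_leq_col /= -{1}(mxrank1 F nu) mxrankS //.
  rewrite -(Pi_split F nn S); apply: addmx_sub_adds; first exact: submx_refl.
  by rewrite -(setIidPl SN) -PiPi submxMl.
set L := block_mx 1%:M 0 (- (lam^-1 *: Pi N)) (1%:M : 'M[F]_nu).
set Rm := block_mx 1%:M (- (lam^-1 *: Pi S)) 0 (1%:M : 'M[F]_nu).
have Lu : L \in unitmx by rewrite unitmxE /L det_lblock !det1 mulr1 unitr1.
have Ru : Rm \in unitmx by rewrite unitmxE /Rm det_ublock !det1 mulr1 unitr1.
have E : L *m block_mx lam%:M (Pi S) (Pi N) 0 *m Rm =
         block_mx lam%:M 0 0 (- (lam^-1 *: (Pi N *m Pi S))).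
  rewrite /L /Rm !mulmx_block !mulmx0 !mul0mx !mulmx1 !mul1mx ?addr0 ?add0r.
  rewrite mul_scalar_mx mul_mx_scalar !scalerN !scalerA mulfV // scale1r !addNr.
  by rewrite scale1r addNr mul0mx add0r mulNmx -scalemxAl.
have -> : \rank (block_mx lam%:M (Pi S) (Pi N) 0) =
          \rank (L *m block_mx lam%:M (Pi S) (Pi N) 0 *m Rm).
  by rewrite mxrankMfree ?row_free_unit // (eqmxMfull _ _) ?row_full_unit.
rewrite E rank_diag_block_mx mxrank_opp (eqmx_scale _ (invr_neq0 l0)) PiPi.
by rewrite -scalemx1 (eqmx_scale _ l0) mxrank1.
Qed.

End P2.
Section ExtRank.
Variable F : fieldType.

Lemma rowcol m1 m2 n1 n2 (a : 'M[F]_(m1,n1)) (b : 'M_(m2,n1)) (c : 'M_(m1,n2)) (d : 'M_(m2,n2)) :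
  row_mx (col_mx a b) (col_mx c d) = col_mx (row_mx a c) (row_mx b d).
Proof. by rewrite -block_mxEh. Qed.

Ltac sub_col :=
  first [ solve [exact: submx_refl]
        | solve [apply: (submx_trans _ (colmx_subl _ _)); sub_col]
        | solve [apply: (submx_trans _ (colmx_subr _ _)); sub_col] ].

Ltac split_col :=
  repeat (rewrite col_mx_sub; apply/andP; split).

Lemma ext_rank a1 a2 b1 b2 c1 c2 d1 d2 (M1 : 'M[F]_(a1,b1)) (M2 : 'M_(a2,b2))
  (Bs : 'M_(a1,c1)) (Ps : 'M_(a2,c2)) (Cs : 'M_(d1,b1)) (Pn : 'M_(d2,b2)) :
  \rank (block_mx (block_mx M1 0 0 M2) (block_mx Bs 0 0 Ps) (block_mx Cs 0 0 Pn)
           (0 : 'M_(d1 + d2, c1 + c2))) =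
  (\rank (block_mx M1 Bs Cs 0) + \rank (block_mx M2 Ps Pn 0))%N.
Proof.
set S1 := block_mx (row_mx 1%:M 0) 0 0 (row_mx 1%:M 0) : 'M[F]_(b1 + c1, (b1 + b2) + (c1 + c2)).
set S2 := block_mx (row_mx 0 1%:M) 0 0 (row_mx 0 1%:M) : 'M[F]_(b2 + c2, (b1 + b2) + (c1 + c2)).
have Sf : row_free (col_mx S1 S2).
  apply/row_freeP; exists (row_mx S1^T S2^T).
  rewrite mul_col_row /S1 /S2 !tr_block_mx !tr_row_mx !trmx1 !trmx0 !mulmx_block.
  rewrite !mul_row_col !mulmx1 !mulmx0 !mul0mx ?addr0 ?add0r ?row_mx0 ?col_mx0.
  by rewrite !block_mx0 -!scalar_mx_block.
rewrite -rank_diag_block_mx -(mxrankMfree _ Sf) mul_block_col !mul0mx addr0 add0r.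
apply/eqmx_rank.
rewrite !block_mxEv !mul_col_mx !mul_row_block !mulmx0 !mul_mx_row !mulmx1 !mulmx0 ?addr0 ?add0r.
rewrite !rowcol -[X in row_mx (col_mx _ _) X]col_mx0 rowcol ?row_mx0.
by apply/andP; split; split_col; sub_col.
Qed.

End ExtRank.
Section Helpers.
Variable F : fieldType.

Lemma row0_sub_diag m1 m2 m3 n1 n2 (X : 'M[F]_(m1,n1)) (Y : 'M_(m3,n2)) (Y' : 'M_(m2,n2)) :
  (Y <= Y')%MS -> (row_mx (0 : 'M_(m3,n1)) Y <= block_mx X 0 0 Y')%MS.
Proof.
case/submxP => D ->.
have -> : row_mx 0 (D *m Y') = row_mx 0 D *m block_mx X 0 0 Y'.
  by rewrite mul_row_block !mul0mx !mulmx0 !add0r.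
exact: submxMl.
Qed.

Lemma rowx0_sub_diag m1 m2 m3 n1 n2 (X : 'M[F]_(m3,n1)) (X' : 'M_(m1,n1)) (Y : 'M_(m2,n2)) :
  (X <= X')%MS -> (row_mx X (0 : 'M_(m3,n2)) <= block_mx X' 0 0 Y)%MS.
Proof.
case/submxP => D ->.
have -> : row_mx (D *m X') 0 = row_mx D 0 *m block_mx X' 0 0 Y.
  by rewrite mul_row_block !mul0mx !mulmx0 !addr0.
exact: submxMl.
Qed.

Lemma diag_sub m1 m2 m3 m4 n1 n2 (X : 'M[F]_(m1,n1)) (X' : 'M_(m3,n1))
   (Y : 'M_(m2,n2)) (Y' : 'M_(m4,n2)) :
  (X <= X')%MS -> (Y <= Y')%MS -> (block_mx X 0 0 Y <= block_mx X' 0 0 Y')%MS.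
Proof.
move=> h1 h2; rewrite block_mxEv col_mx_sub rowx0_sub_diag //=.
exact: row0_sub_diag.
Qed.

Lemma eig_rank N (g : 'M[F]_N) a : eigenvalue g a = (\rank (a%:M - g)%R < N)%N.
Proof.
rewrite /eigenvalue /eigenspace kermx_eq0 /row_free -mxrank_opp opprB.
by rewrite ltn_neqAle rank_leq_row andbT.
Qed.

Lemma rank_topleft a b c d (M : 'M[F]_(a,b)) (Bs : 'M_(a,c)) (Cs : 'M_(d,b)) :
  (\rank M <= \rank (block_mx M Bs Cs 0))%N.
Proof.
have E : M = row_mx 1%:M 0 *m block_mx M Bs Cs 0 *m col_mx 1%:M 0.
  by rewrite mul_row_block !mul1mx !mul0mx !addr0 mul_row_col mulmx1 mulmx0 addr0.
by rewrite {1}E (leq_trans (mxrankM_maxl _ _)) // mxrankM_maxr.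
Qed.

End Helpers.
Section Ext.
Variable R : realType.
Local Notation Cc := (R[i]).
Local Notation rc := (real_complex R).
Local Notation cm := (map_mx rc).
Variables (n m : nat) (p q : 'I_m -> nat) (A : 'M[R]_n).
Variables (B : forall i : 'I_m, 'M[R]_(n, p i)) (C : forall i : 'I_m, 'M[R]_(q i, n)).
Variables (nbr : 'I_m -> {set 'I_m}) (nn : 'I_m -> nat).
Local Notation nu := (\sum_(k < m) nn k)%N.
Local Notation cB := (fun i => cm (B i)).
Local Notation cC := (fun i => cm (C i)).
Local Notation eB := (fun i => cm (Bbar nn B i)).
Local Notation eC := (fun i => cm (Cbar nn nbr C i)).
Local Notation E k := (Eblk Cc nn k).
Local Notation PiC := (Pi Cc nn).

Lemma cm_Eblk i : cm (Eblk R nn i) = E i.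
Proof. by apply/matrixP => x y; rewrite !mxE rmorph_nat. Qed.

Lemma cm_Esel S : cm (Esel R nn S) = Esel Cc nn S.
Proof. by apply/matrixP => x y; rewrite !mxE rmorph_nat. Qed.

Lemma eB_E i : eB i = block_mx (cB i) 0 0 (E i).
Proof. by rewrite /Bbar map_block_mx !map_mx0 cm_Eblk. Qed.

Lemma eC_E i : eC i = block_mx (cC i) 0 0 (Esel Cc nn (Nset nbr i))^T.
Proof. by rewrite /Cbar map_block_mx !map_mx0 -map_trmx cm_Esel. Qed.

Lemma Esel_eq S : ((Esel Cc nn S)^T :=: \sum_(k in S) <<(E k)^T>>)%MS.
Proof. by rewrite /Esel tr_mxrow; exact: (mxcol_enum (fun k => (E k)^T)). Qed.

Definition PRo lam s :=
  \rank (block_mx (lam%:M - cm A)%R (Bsp cB s)^T (Csp cC (~: s)) 0).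

Lemma PRo_pbh lam s : PRo lam s = pbh_rank A B C s lam.
Proof.
have EB : (cm (Bsel B s))^T = \mxcol_(k < #|s|) (cB (enum_val k))^T.
  by apply/matrixP => x y; rewrite !mxE.
have EC : cm (Csel C (~: s)) = \mxcol_(k < #|~: s|) cC (enum_val k).
  by apply/matrixP => x y; rewrite !mxE.
rewrite /pbh_rank /PRo !cmxE; apply/eqP; rewrite eqn_leq; apply/andP; split.
  apply: rank_blk_le.
    by rewrite trmxK EB (mxcol_enum (fun i => (cB i)^T)) submx_refl.
  by rewrite EC (mxcol_enum cC) submx_refl.
apply: rank_blk_le.
  by rewrite trmxK EB (mxcol_enum (fun i => (cB i)^T)) submx_refl.
by rewrite EC (mxcol_enum cC) submx_refl.
Qed.

Definition PRe lam s :=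
  \rank (block_mx (lam%:M - cm (Abar nn A))%R (Bsp eB s)^T (Csp eC (~: s)) 0).

Lemma PRe_eq lam s :
  PRe lam s = (PRo lam s + nu + \rank (PiC (Nsetof nbr (~: s) :&: s)))%N.
Proof.
set N := Nsetof nbr (~: s).
have SN : ~: s \subset N.
  apply/subsetP => i iS; apply/bigcupP; exists i => //.
  by rewrite /Nset setU11.
have EA : (lam%:M - cm (Abar nn A) =
           block_mx (lam%:M - cm A) 0 0 (lam%:M : 'M[Cc]_nu))%R.
  rewrite /Abar map_block_mx !map_mx0 (scalar_mx_block n nu lam) opp_block_mx.
  by rewrite add_block_mx !oppr0 !addr0.
have Eb : PRe lam s = \rank (block_mx (block_mx (lam%:M - cm A)%R 0 0 (lam%:M : 'M[Cc]_nu))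
     (block_mx (Bsp cB s)^T 0 0 (PiC s)) (block_mx (Csp cC (~: s)) 0 0 (PiC N)) 0).
  rewrite /PRe EA; apply/eqP; rewrite eqn_leq; apply/andP; split; apply: rank_blk_le.
  - rewrite trmxK tr_block_mx !trmx0 trmxK Pi_tr.
    apply/sumsmx_subP => i iS; rewrite genmxE eB_E tr_block_mx !trmx0.
    apply: diag_sub; first exact: (sum_sup (fun i => (cB i)^T) iS).
    exact: Et_sub_Pi.
  - apply/sumsmx_subP => i iS; rewrite genmxE eC_E.
    apply: diag_sub; first exact: (sum_sup cC iS).
    rewrite Esel_eq; apply/sumsmx_subP => k kN; rewrite genmxE; apply: Et_sub_Pi.
    by apply/bigcupP; exists i.
  - rewrite trmxK tr_block_mx !trmx0 trmxK Pi_tr block_mxEv col_mx_sub.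
    apply/andP; split.
      rewrite rowmx0E; apply: sum_mul_sub (submx_refl _) _ => i iS; rewrite -rowmx0E.
      apply: submx_trans _ (sum_sup (fun i => (eB i)^T) iS).
      by rewrite eB_E tr_block_mx !trmx0; exact: rowx0_sub_diag (submx_refl _).
    rewrite row0mxE; apply: (sum_mul_sub (Z := fun i => (E i)^T) (P := fun i => i \in s)) => [|i iS].
      by rewrite (Pi_eqmx Cc nn s) submx_refl.
    rewrite -row0mxE; apply: submx_trans _ (sum_sup (fun i => (eB i)^T) iS).
    by rewrite eB_E tr_block_mx !trmx0; exact: row0_sub_diag (submx_refl _).
  - rewrite block_mxEv col_mx_sub; apply/andP; split.
      rewrite rowmx0E; apply: sum_mul_sub (submx_refl _) _ => i iS; rewrite -rowmx0E.
      apply: submx_trans _ (sum_sup eC iS).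
      by rewrite eC_E; exact: rowx0_sub_diag (submx_refl _).
    rewrite row0mxE; apply: (sum_mul_sub (Z := fun i => (E i)^T) (P := fun i => i \in N)) => [|k kN].
      by rewrite (Pi_eqmx Cc nn N) submx_refl.
    rewrite -row0mxE; case/bigcupP: kN => i iS kNi.
    apply: submx_trans _ (sum_sup eC iS).
    rewrite eC_E; apply: row0_sub_diag.
    by rewrite Esel_eq; exact: (sum_sup (fun k => (E k)^T) kNi).
by rewrite Eb ext_rank P2_rank // addnA.
Qed.

End Ext.

Unset Implicit Arguments.

Theorem theorem3 (R : realType) (n m : nat) (p q : 'I_m -> nat)
  (A : 'M[R]_n) (B : forall i : 'I_m, 'M[R]_(n, p i))
  (C : forall i : 'I_m, 'M[R]_(q i, n))
  (nbr : 'I_m -> {set 'I_m}) (nn : 'I_m -> nat) :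
  controllable A (\mxrow_(i < m) B i) ->
  observable (\mxcol_(i < m) C i) A ->
  weakly_connected nbr ->
  (forall i : 'I_m, forall (s : {set 'I_m}) (lam : R[i]),
      spec A lam -> (n <= nn i + pbh_rank A B C s lam)%N) ->
  (no_fixed_spectrum (Abar nn A) (Bbar nn B) (Cbar nn nbr C)
   <->
   (forall s : {set 'I_m},
      (exists lam : R[i], spec A lam /\ (pbh_rank A B C s lam < n)%N) ->
      Nsetof nbr (~: s) :&: s != set0)).
Proof.
move=> _ _ _ Hnn.
set eB := fun i => map_mx (real_complex R) (Bbar nn B i).
set eC := fun i => map_mx (real_complex R) (Cbar nn nbr C i).
have key : forall lam F,
  (lam%:M - cmx (Abar nn A + \sum_i Bbar nn B i *m F i *m Cbar nn nbr C i) =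
   (lam%:M - map_mx (real_complex R) (Abar nn A)) +
   \sum_i eB i *m map_mx (real_complex R) (- F i) *m eC i)%R.
  move=> lam F; rewrite cmxE map_mxD map_mx_sum opprD addrA; congr (_ + _).
  rewrite -sumrN; apply: eq_bigr => i _.
  by rewrite !map_mxM map_mxN mulmxN mulNmx.
split.
  move=> Hnf s [lam [Hsp Hlt]]; apply/negP => /eqP H0.
  apply: Hnf; exists lam => F.
  rewrite /spec eig_rank key.
  apply: (fixed_rank (B := eB) (C := eC) (s := s)).
  have := PRe_eq A B C nbr nn lam s; rewrite /PRe => ->.
  rewrite H0 Pi0 mxrank0 addn0 PRo_pbh.
  by rewrite ltn_add2r.
move=> Hcond [lam Hfix].
set M := (lam%:M - map_mx (real_complex R) (Abar nn A))%R.
have Hall : forall s : {set 'I_m}, s \subset [set: 'I_m] ->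
   (n + \sum_(k < m) nn k <= \rank (block_mx M (Bsp eB s)^T (Csp eC ([set: 'I_m] :\: s)) 0))%N.
  move=> s _; rewrite setTD.
  have := PRe_eq A B C nbr nn lam s; rewrite /PRe -/M => ->.
  case: (leqP n (PRo A B C lam s)) => h; first lia.
  have Hsp : spec A lam.
    rewrite /spec; case: (boolP (eigenvalue (cmx A) lam)) => // Hn; exfalso.
    move: Hn; rewrite eig_rank cmxE -leqNgt => Hn.
    have : (n <= PRo A B C lam s)%N by apply: leq_trans Hn _; exact: rank_topleft.
    lia.
  rewrite PRo_pbh in h *.
  have [k kNs] := set0Pn _ (Hcond s (ex_intro _ lam (conj Hsp h))).
  have h1 := Hnn k s lam Hsp.
  have h2 := leq_trans (rank_Et (R[i]) nn k) (mxrankS (Et_sub_Pi (R[i]) nn kNs)).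
  lia.
have [G HG] := AC (B := eB) (C := eC) (k := #|[set: 'I_m]|) erefl Hall.
have := Hfix (fun i => - G i); rewrite /spec eig_rank key -/M.
have -> : \sum_i eB i *m map_mx (real_complex R) (- - G i) *m eC i =
          \sum_(i in [set: 'I_m]) eB i *m map_mx (real_complex R) (G i) *m eC i.
  by apply: eq_big => [i|i _]; rewrite ?inE ?opprK.
by rewrite ltnNge HG.
Qed.
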